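(* Let $\mathcal{D}$ be an abstract system of proof notations and $d\in\mathcal{D}$ with $o(d)\ge2$. Then for all $n\ge1$ and all $s\ge2$, $\vartheta_{\mathsf E^nd}(s)\le 2_{n-1}(2\cdot o(d))\cdot s$, where $\mathsf E^nd$ denotes $\mathsf E\cdots\mathsf Ed$ with $n$ occurrences of $\mathsf E$.
   Context: An abstract system of proof notations is a set $\mathcal{D}$ with functions $|\cdot|,o(\cdot)\colon\mathcal{D}\to\mathbb{N}\setminus\{0\}$ (size and height) and a relation $\to\subseteq\mathcal{D}\times\mathcal{D}$ such that $d\to d'$ implies $o(d')<o(d)$. The cut-elimination closure $\mathbb{E}(\mathcal{D})$ consists of formal terms inductively generated by: every $d\in\mathcal{D}$ (with size and height inherited); if $d,e\in\mathbb{E}(\mathcal{D})$ then $\mathsf{I}d,\ \mathsf{R}de,\ \mathsf{E}d\in\mathbb{E}(\mathcal{D})$ ($\mathsf I,\mathsf R,\mathsf E$ new symbols), with $|\mathsf Id|=|d|+1$, $|\mathsf Rde|=|d|+|e|+1$, $|\mathsf Ed|=|d|+1$, $o(\mathsf Id)=o(d)$, $o(\mathsf Rde)=o(d)+o(e)$, $o(\mathsf Ed)=2^{o(d)}-1$. The size function $\vartheta_d\colon\mathbb{N}\to\mathbb{N}$ for $d\in\mathbb{E}(\mathcal{D})$ is defined by recursion: $\vartheta_d(s)=s$ for $d\in\mathcal{D}$; $\vartheta_{\mathsf Id}(s)=\vartheta_d(s)+1$; $\vartheta_{\mathsf Rde}(s)=\max\{|d|+1+\vartheta_e(s),\ \vartheta_d(s)+1\}$;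 $\vartheta_{\mathsf Ed}(s)=o(d)\cdot(\vartheta_d(s)+2)$. Iterated exponentiation: $2_0(x)=x$, $2_{n+1}(x)=2^{2_n(x)}$. *)

(* Defs.v *)
From Stdlib Require Import Arith Lia.

Record ProofSystem := {
  pn_carrier :> Type;
  pn_size : pn_carrier -> nat;
  pn_height : pn_carrier -> nat;
  pn_step : pn_carrier -> pn_carrier -> Prop;
  pn_size_pos : forall d, 0 < pn_size d;
  pn_height_pos : forall d, 0 < pn_height d;
  pn_step_height : forall d d', pn_step d d' -> pn_height d' < pn_height d
}.

Inductive ECl (D : ProofSystem) : Type :=
| EBase : D -> ECl D
| EI : ECl D -> ECl D
| ER : ECl D -> ECl D -> ECl D
| EE : ECl D -> ECl D.

Arguments EBase {D} _.
Arguments EI {D} _.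
Arguments ER {D} _ _.
Arguments EE {D} _.

Fixpoint esize {D : ProofSystem} (d : ECl D) : nat :=
  match d with
  | EBase x => pn_size D x
  | EI d => esize d + 1
  | ER d e => esize d + esize e + 1
  | EE d => esize d + 1
  end.

Fixpoint eheight {D : ProofSystem} (d : ECl D) : nat :=
  match d with
  | EBase x => pn_height D x
  | EI d => eheight d
  | ER d e => eheight d + eheight e
  | EE d => 2 ^ eheight d - 1
  end.

Fixpoint theta {D : ProofSystem} (d : ECl D) (s : nat) : nat :=
  match d with
  | EBase _ => s
  | EI d => theta d s + 1
  | ER d e => Nat.max (esize d + 1 + theta e s) (theta d s + 1)
  | EE d => eheight d * (theta d s + 2)
  end.

Fixpoint Eiter {D : ProofSystem} (n : nat) (d : ECl D) : ECl D :=
  match n with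
  | 0 => d
  | S n => EE (Eiter n d)
  end.

Fixpoint tower (n x : nat) : nat :=
  match n with
  | 0 => x
  | S n => 2 ^ tower n x
  end.

(* Main.v *)
Require Import Defs.
From Stdlib Require Import Arith Lia.

Lemma key_step (H x : nat) : 2 <= H -> 1 <= x -> H * (x + 1) <= 2 ^ x ->
  (2 ^ H - 1) * (2 ^ x + 1) <= 2 ^ (2 ^ x).
Proof.
  intros h1 h2 h3.
  assert (Hs : H + x + 1 <= 2 ^ x) by nia.
  assert (E : 2 ^ (H + x + 1) <= 2 ^ (2 ^ x)) by (apply Nat.pow_le_mono_r; lia).
  rewrite !Nat.pow_add_r in E. simpl in E.
  assert (1 <= 2 ^ x) by (apply Nat.pow_le_mono_r with (a:=2) (b:=0); lia).
  assert (1 <= 2 ^ H) by (apply Nat.pow_le_mono_r with (a:=2) (b:=0); lia).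
  nia.
Qed.

Lemma base_ineq (h : nat) : 2 <= h -> (2 ^ h - 1) * (2 * h + 1) <= 2 ^ (2 * h).
Proof.
  intros Hh.
  destruct (Nat.eq_dec h 2) as [->|Hne]. simpl. lia.
  assert (L : forall k, 2 * (k + 3) + 2 <= 2 ^ (k + 3)).
  { induction k. simpl. lia. replace (S k + 3) with (S (k + 3)) by lia.
    rewrite Nat.pow_succ_r'. lia. }
  specialize (L (h - 3)). replace (h - 3 + 3) with h in L by lia.
  replace (2 * h) with (h + h) at 2 by lia. rewrite Nat.pow_add_r.
  assert (1 <= 2 ^ h) by (apply Nat.pow_le_mono_r with (a:=2) (b:=0); lia).
  nia.
Qed.

Theorem mainTheorem8 (D : ProofSystem) (d : D) :
  2 <= pn_height D d ->
  forall n s : nat, 1 <= n -> 2 <= s ->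
  theta (Eiter n (EBase d)) s <= tower (n - 1) (2 * pn_height D d) * s.
Proof.
  intros Hh n s Hn Hs.
  set (h := pn_height D d) in *.
  assert (Hge : forall k, 2 <= eheight (Eiter k (EBase d))).
  { induction k; simpl. exact Hh.
    assert (4 <= 2 ^ eheight (Eiter k (EBase d))).
    { change 4 with (2 ^ 2). apply Nat.pow_le_mono_r; lia. } lia. }
  assert (Tge : forall k, 1 <= tower k (2 * h)).
  { induction k; simpl. lia.
    apply Nat.pow_le_mono_r with (a:=2) (b:=0); lia. }
  assert (M : forall m, theta (Eiter (S m) (EBase d)) s <= tower m (2 * h) * s /\
     eheight (Eiter (S m) (EBase d)) * (tower m (2 * h) + 1) <= 2 ^ tower m (2 * h)).
  { induction m.
    - simpl. fold h. split. nia. apply base_ineq. exact Hh.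
    - destruct IHm as [I1 I2].
      change (Eiter (S (S m)) (EBase d)) with (EE (Eiter (S m) (EBase d))).
      change (tower (S m) (2 * h)) with (2 ^ tower m (2 * h)).
      split.
      + cbn [theta]. nia.
      + cbn [eheight]. apply key_step; auto. }
  destruct n as [|m]. lia. replace (S m - 1) with m by lia. apply M.
Qed.
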